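(* The Petersen graph $P$ satisfies $\alpha_{\mathrm{od}}(P)=3$ and $\chi_{\mathrm{so}}(P)=6$. Moreover, every odd independent set of $P$ with at least two vertices equals the neighborhood $N(v)$ of some vertex $v$.
   Context: An odd independent set in $G=(V,E)$ is an independent set $S$ such that every $v\in V\setminus S$ has either no neighbor or an odd number of neighbors in $S$; $\alpha_{\mathrm{od}}(G)$ is its maximum size. A strong odd coloring is a proper coloring such that for each vertex $v$ every color on $N(v)$ occurs an odd number of times on $N(v)$; $\chi_{\mathrm{so}}(G)$ is the minimum number of colors. $N(v)$ is the open neighborhood. *)

(* Defs.v *)
From mathcomp Require Import all_boot.
Set Implicit Arguments. Unset Strict Implicit. Unset Printing Implicit Defensive.

(* A simple graph is a symmetric irreflexive relation e on a finite type T. *)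
Section Graph.
Variables (T : finType) (e : rel T).

Definition nbhd (v : T) : {set T} := [set u | e v u].

Definition independent (S : {set T}) : bool :=
  [forall x in S, forall y in S, ~~ e x y].

Definition odd_independent (S : {set T}) : bool :=
  independent S &&
  [forall v in ~: S, (#|nbhd v :&: S| == 0) || odd #|nbhd v :&: S|].

Definition alpha_od : nat := \max_(S : {set T} | odd_independent S) #|S|.

Definition strong_odd_coloring (k : nat) (c : T -> 'I_k) : Prop :=
  (forall x y, e x y -> c x != c y) /\
  (forall (v : T) (i : 'I_k),
     let m := #|[set u in nbhd v | c u == i]| in (m == 0) || odd m).

Definition so_colorable (k : nat) : Prop :=
  exists c : T -> 'I_k, strong_odd_coloring c.

Definition chi_so_eq (k : nat) : Prop :=
  so_colorable k /\ forall j, so_colorable j -> k <= j.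
End Graph.

(* The Petersen graph as the Kneser graph K(5,2): vertices are the
   2-subsets of {0,..,4}, adjacent iff disjoint. *)
Definition petersen_vertex := {A : {set 'I_5} | #|A| == 2}.
Definition petersen_adj : rel petersen_vertex :=
  fun A B => [disjoint val A & val B].

(* Main.v *)
Require Import Defs.
From mathcomp Require Import all_boot.
Set Implicit Arguments. Unset Strict Implicit. Unset Printing Implicit Defensive.

Notation V := petersen_vertex.
Notation A := petersen_adj.

Definition ps : seq (nat * nat) :=
  [:: (0,1);(0,2);(0,3);(0,4);(1,2);(1,3);(1,4);(2,3);(2,4);(3,4)]%N.
Definition adjN (p q : nat * nat) : bool :=
  [&& p.1 != q.1, p.1 != q.2, p.2 != q.1 & p.2 != q.2].
Definition iota5 (p : nat * nat) : {set 'I_5} := [set inord p.1; inord p.2].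

Lemma ps_ok p : p \in ps -> [/\ p.1 < p.2, p.2 < 5 & p.1 < 5].
Proof.
move=> h; have /allP/(_ p h)/and3P[] : all (fun p => [&& p.1 < p.2, p.2 < 5 & p.1 < 5]) ps by [].
by [].
Qed.

Lemma iota5_card p : p \in ps -> #|iota5 p| == 2.
Proof.
move=> /ps_ok [h1 h2 h3]; rewrite cards2 -val_eqE /= !inordK //.
by rewrite neq_ltn h1.
Qed.

Definition v0 : V := Sub (iota5 (0,1)) (iota5_card (p:=(0,1)) isT).
Definition mk (p : nat * nat) : V := insubd v0 (iota5 p).

Lemma val_mk p : p \in ps -> val (mk p) = iota5 p.
Proof. by move=> h; rewrite /mk insubdK //; apply: iota5_card. Qed.

Lemma mem_iota5 p (x : 'I_5) : p \in ps ->
  (x \in iota5 p) = (val x == p.1) || (val x == p.2).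
Proof.
move=> /ps_ok [h1 h2 h3]; rewrite !inE -!val_eqE /= !inordK //.
Qed.

Lemma disj2 (a b : 'I_5) (B : {set 'I_5}) :
  [disjoint [set a; b] & B] = (a \notin B) && (b \notin B).
Proof.
rewrite (@eq_disjoint _ _ [predU1 a & pred1 b]); last by move=> x; rewrite !inE.
by rewrite disjointU1 disjoint1.
Qed.

Lemma adj_mk p q : p \in ps -> q \in ps -> A (mk p) (mk q) = adjN p q.
Proof.
move=> hp hq; rewrite /A !val_mk // {1}/iota5 disj2 !mem_iota5 //.
have [h1 h2 h3] := ps_ok hp.
have e1 : val (inord p.1 : 'I_5) = p.1 by rewrite /= inordK.
have e2 : val (inord p.2 : 'I_5) = p.2 by rewrite /= inordK.
by rewrite e1 e2 !negb_or -!andbA.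
Qed.

Lemma pair_in a b : a < b -> b < 5 -> (a, b) \in ps.
Proof.
move=> ab b5.
have H : all (fun x => all (fun y => (x < y) ==> ((x,y) \in ps)) (iota 0 5)) (iota 0 5) by [].
have ha : a \in iota 0 5 by rewrite mem_iota /= (ltn_trans ab b5).
have hb : b \in iota 0 5 by rewrite mem_iota /= b5.
move/allP: H => /(_ a ha) /allP /(_ b hb).
by rewrite ab.
Qed.

Lemma surj (v : V) : exists2 p, p \in ps & v = mk p.
Proof.
have /cards2P [x [y [xy e]]] := valP v.
have mkxy (a b : 'I_5) : a < b -> val v = [set a; b] -> exists2 p, p \in ps & v = mk p.
  move=> ab ev; have hp : (val a, val b) \in ps := pair_in ab (ltn_ord b).
  exists (val a, val b) => //.
  by apply: val_inj; rewrite val_mk // ev /iota5 /= !inord_val.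
case: (ltngtP x y) => h.
- exact: (mkxy x y h e).
- by apply: (mkxy y x h); rewrite e setUC.
- by move: xy; rewrite -val_eqE /= h eqxx.
Qed.

Lemma mk_inj p q : p \in ps -> q \in ps -> mk p = mk q -> p = q.
Proof.
move=> hp hq e.
have h : all (fun r => adjN p r == adjN q r) ps.
  by apply/allP => r hr; rewrite -!adj_mk // e.
have /allP/(_ p hp)/allP/(_ q hq) : all (fun p => all (fun q =>
   all (fun r => adjN p r == adjN q r) ps ==> (p == q)) ps) ps by vm_compute.
by rewrite h => /eqP.
Qed.

Lemma card_mk (P : pred V) : #|P| = count (fun p => P (mk p)) ps.
Proof.
rewrite cardE /enum_mem size_filter -(count_map mk P).
suff /permP -> : perm_eq (Finite.enum V) (map mk ps) by [].
apply: uniq_perm.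
- by rewrite -enumT; exact: enum_uniq.
- by rewrite (map_inj_in_uniq (s:=ps)) //; move=> p q; apply: mk_inj.
- move=> v; rewrite -enumT mem_enum; case: (surj v) => p hp ->.
  by rewrite map_f.
Qed.

Lemma card_mkS (S : {set V}) : #|S| = count (fun p => mk p \in S) ps.
Proof. exact: card_mk. Qed.

Lemma G_sym x y : A x y = A y x.
Proof. by rewrite /A disjoint_sym. Qed.

Lemma G_irr x : ~~ A x x.
Proof.
case: (surj x) => p hp ->; rewrite adj_mk //.
have /allP/(_ p hp) : all (fun p => ~~ adjN p p) ps by [].
by [].
Qed.

Lemma G_tri a b c : A a b -> A b c -> ~~ A a c.
Proof.
case: (surj a) => p hp ->; case: (surj b) => q hq ->; case: (surj c) => r hr ->.
rewrite !adj_mk //.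
have H : all (fun p => all (fun q => all (fun r => adjN p q ==> adjN q r ==> ~~ adjN p r) ps) ps) ps
  by vm_compute.
by move/allP: H => /(_ p hp) /allP /(_ q hq) /allP /(_ r hr) /implyP H /H /implyP.
Qed.

Lemma G_common x y : x != y -> ~~ A x y -> exists w, A w x && A w y.
Proof.
case: (surj x) => p hp ->; case: (surj y) => q hq ->.
rewrite !adj_mk // => neq nadj.
have pq : p != q by apply: contraNneq neq => ->.
have H : all (fun p => all (fun q => (p != q) ==> adjN p q || has (fun r => adjN r p && adjN r q) ps) ps) ps
  by vm_compute.
move/allP: H => /(_ p hp) /allP /(_ q hq) /implyP /(_ pq).
rewrite (negbTE nadj) orFb => /hasP [r hr hh].
by exists (mk r); rewrite !adj_mk.
Qed.

Lemma G_uniqc x y r s : x != y -> A r x -> A r y -> A s x -> A s y -> r = s.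
Proof.
case: (surj x) => p hp ->; case: (surj y) => q hq ->.
case: (surj r) => a ha ->; case: (surj s) => b hb ->.
rewrite !adj_mk // => neq h1 h2 h3 h4.
have pq : p != q by apply: contraNneq neq => ->.
have H : all (fun p => all (fun q => all (fun a => all (fun b =>
   [&& p != q, adjN a p, adjN a q, adjN b p & adjN b q] ==> (a == b)) ps) ps) ps) ps
  by vm_compute.
move/allP: H => /(_ p hp) /allP /(_ q hq) /allP /(_ a ha) /allP /(_ b hb).
by rewrite pq h1 h2 h3 h4 => /eqP ->.
Qed.

Lemma G_card3 w : #|nbhd A w| = 3.
Proof.
case: (surj w) => q hq ->; rewrite card_mkS.
rewrite (eq_in_count (a2 := adjN q)); last by move=> p hp; rewrite inE adj_mk.
have H : all (fun q => count (adjN q) ps == 3) ps by vm_compute.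
by move/allP: H => /(_ q hq) /eqP.
Qed.

Definition mN (k : nat) (p : nat * nat) : bool := (k == p.1) || (k == p.2).
Definition colN (p : nat * nat) : nat :=
  if ~~ mN 0 p && ~~ mN 1 p then 0 else
  if ~~ mN 2 p && ~~ mN 3 p then 1 else 2 + 2 * mN 1 p + mN 3 p.
Definition mS (k : nat) (B : {set 'I_5}) : bool := (inord k : 'I_5) \in B.
Definition colf (B : {set 'I_5}) : nat :=
  if ~~ mS 0 B && ~~ mS 1 B then 0 else
  if ~~ mS 2 B && ~~ mS 3 B then 1 else 2 + 2 * mS 1 B + mS 3 B.
Definition col (v : V) : 'I_6 := inord (colf (val v)).

Lemma mS_iota k p : k < 5 -> p \in ps -> mS k (iota5 p) = mN k p.
Proof.
move=> hk hp; rewrite /mS mem_iota5 //.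
have e : val (inord k : 'I_5) = k by rewrite /= inordK.
by rewrite e.
Qed.

Lemma col_mk p : p \in ps -> val (col (mk p)) = colN p.
Proof.
move=> hp; rewrite /col /= inordK val_mk // /colf !mS_iota //.
have H : all (fun p => colN p < 6) ps by vm_compute.
by move/allP: H => /(_ p hp).
Qed.

Lemma col_proper x y : A x y -> col x != col y.
Proof.
case: (surj x) => p hp ->; case: (surj y) => q hq ->.
rewrite adj_mk // -val_eqE !col_mk //.
have H : all (fun p => all (fun q => adjN p q ==> (colN p != colN q)) ps) ps by vm_compute.
by move/allP: H => /(_ p hp) /allP /(_ q hq) /implyP.
Qed.

Lemma col_odd (v : V) (i : 'I_6) :
  let m := #|[set u in nbhd A v | col u == i]| in (m == 0) || odd m.
Proof.
case: (surj v) => q hq ->; rewrite /= card_mkS.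
rewrite (eq_in_count (a2 := fun p => adjN q p && (colN p == val i))); last first.
  by move=> p hp; rewrite !inE adj_mk // -val_eqE col_mk.
have H : all (fun q => all (fun i => let m := count (fun p => adjN q p && (colN p == i)) ps in
    (m == 0) || odd m) (iota 0 6)) ps by vm_compute.
have hi : val i \in iota 0 6 by rewrite mem_iota /= ltn_ord.
by move/allP: H => /(_ q hq) /allP /(_ _ hi).
Qed.

Lemma so6 : so_colorable A 6.
Proof. by exists col; split; [exact: col_proper | exact: col_odd]. Qed.

Lemma in_nbhd w u : (u \in nbhd A w) = A w u.
Proof. by rewrite /nbhd inE. Qed.

Lemma indep S x y : independent A S -> x \in S -> y \in S -> ~~ A x y.
Proof. by move=> /forall_inP /(_ x) H xS yS; move: (H xS) => /forall_inP /(_ y yS). Qed.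

Lemma P1 S : odd_independent A S -> 1 < #|S| -> exists w, S = nbhd A w.
Proof.
move=> /andP [ind /forall_inP od] /card_gt1P [x [y [xS yS xy]]].
have nxy := indep ind xS yS.
case: (G_common xy nxy) => w /andP [wx wy].
have wS : w \notin S.
  by apply/negP => wS; move: (indep ind wS xS); rewrite wx.
have wSc : w \in ~: S by rewrite inE wS.
have hw := od w wSc.
have sub : nbhd A w \subset S.
  have gt1 : 1 < #|nbhd A w :&: S|.
    by apply/card_gt1P; exists x, y; rewrite !inE ?in_nbhd wx wy xS yS.
  have le3 : #|nbhd A w :&: S| <= 3 := leq_trans (subset_leq_card (subsetIl _ _)) (eq_leq (G_card3 w)).
  have e3 : #|nbhd A w :&: S| = 3.
    by move: hw le3 gt1; case: #|nbhd A w :&: S| => [|[|[|[|n]]]].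
  apply/setIidPl/eqP; rewrite eqEcard subsetIl e3 G_card3 //.
exists w; apply/eqP; rewrite eqEsubset sub andbT; apply/subsetP => z zS.
rewrite in_nbhd; apply/negPn/negP => nwz.
have zw : z != w by apply: contraNneq wS => <-.
have nzw : ~~ A z w by rewrite G_sym.
case: (G_common zw nzw) => u /andP [uz uw].
have uS : u \in S by apply: (subsetP sub); rewrite in_nbhd G_sym.
by move: (indep ind uS zS); rewrite uz.
Qed.

Lemma nbhd_oi w : odd_independent A (nbhd A w).
Proof.
apply/andP; split.
  apply/forall_inP => x; rewrite in_nbhd => wx; apply/forall_inP => y; rewrite in_nbhd => wy.
  by apply: (G_tri (b := w)); rewrite // G_sym.
apply/forall_inP => v; rewrite inE ?in_nbhd => nwv.
case: (eqVneq v w) => [->|vw]; first by rewrite setIid G_card3.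
have nvw : ~~ A v w by rewrite G_sym.
case: (G_common vw nvw) => r /andP [rv rw].
have -> : nbhd A v :&: nbhd A w = [set r].
  apply/setP => u; rewrite !inE ?in_nbhd; apply/andP/eqP => [[h1 h2]|->].
    by apply: (G_uniqc vw); rewrite // G_sym.
  by rewrite !(G_sym _ r).
by rewrite cards1.
Qed.

From mathcomp Require Import zify.

Lemma alpha3 : alpha_od A = 3.
Proof.
apply/eqP; rewrite eqn_leq; apply/andP; split.
  apply/bigmax_leqP => S hS; case: (leqP #|S| 1) => h; first exact: leq_trans h _.
  by case: (P1 hS h) => w ->; rewrite G_card3.
rewrite -{1}(G_card3 v0); apply: leq_bigmax_cond; exact: nbhd_oi.
Qed.

Lemma cardV : #|[set: V]| = 10.
Proof. by rewrite card_mkS (eq_count (a2 := predT)) // => p; rewrite inE. Qed.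

Lemma lower j : so_colorable A j -> 6 <= j.
Proof.
move=> [c [prop od]].
pose C (i : 'I_j) := [set u | c u == i].
have hC i : odd_independent A (C i).
  apply/andP; split.
    apply/forall_inP => x; rewrite inE => /eqP cx; apply/forall_inP => y; rewrite inE => /eqP cy.
    by apply/negP => /prop; rewrite cx cy eqxx.
  apply/forall_inP => v _.
  have -> : nbhd A v :&: C i = [set u in nbhd A v | c u == i] by apply/setP => u; rewrite !inE.
  exact: (od v i).
have adjw i i' w w' : i != i' -> C i = nbhd A w -> C i' = nbhd A w' -> A w w'.
  move=> ii' ew ew'.
  have disj u : u \in nbhd A w -> u \in nbhd A w' -> False.
    rewrite -ew -ew' !inE => /eqP e1 /eqP e2; by move: ii'; rewrite -e1 -e2 eqxx.
  have ww' : w != w'.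
    apply/negP => /eqP e; have : 0 < #|nbhd A w| by rewrite G_card3.
    by case/card_gt0P => u hu; apply: (disj u) => //; rewrite -e.
  apply/negPn/negP => nA; case: (G_common ww' nA) => u /andP [uw uw'].
  by apply: (disj u); rewrite in_nbhd G_sym.
pose B := [set i | 1 < #|C i|].
have hB : #|B| <= 2.
  rewrite leqNgt; apply/negP => /card_gt2P [i1 [i2 [i3 [[h1 h2 h3] [d12 d23 d31]]]]].
  move: h1 h2 h3; rewrite !inE => /(P1 (hC _)) [w1 e1] /(P1 (hC _)) [w2 e2] /(P1 (hC _)) [w3 e3].
  have a12 := adjw _ _ _ _ d12 e1 e2.
  have a23 := adjw _ _ _ _ d23 e2 e3.
  have a13 : A w1 w3 by apply: (adjw _ _ _ _ _ e1 e3); rewrite eq_sym.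
  by move: (G_tri a12 a23); rewrite a13.
have hsum : #|[set: V]| = \sum_(i < j) #|C i|.
  rewrite -sum1_card (partition_big c predT) //=.
  by apply: eq_bigr => i _; rewrite -[#|C i|]sum1_card; apply: eq_bigl => u; rewrite !inE.
have hle : \sum_(i < j) #|C i| <= \sum_(i < j) (1 + (if i \in B then 2 else 0)).
  apply: leq_sum => i _; rewrite inE; case: ifP => h.
    by case: (P1 (hC i) h) => w ->; rewrite G_card3.
  by rewrite addn0 leqNgt h.
move: hle; rewrite big_split /= -big_mkcond !sum_nat_const card_ord -hsum cardV.
lia.
Qed.

Theorem proposition8 :
  [/\ alpha_od petersen_adj = 3,
      chi_so_eq petersen_adj 6 &
      forall S : {set petersen_vertex},
        odd_independent petersen_adj S -> 2 <= #|S| ->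
        exists v : petersen_vertex, S = nbhd petersen_adj v].
Proof.
split.
- exact: alpha3.
- by split; [exact: so6 | exact: lower].
- move=> S hS h; exact: P1 hS h.
Qed.
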